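(* Let $(V,\{\nu_n\})$ be an $L^\infty$-MOS and $(W,\{M_n(W)_+\},e)$ an abstract operator system, regarded as an $L^\infty$-MOS with order gauges $\omega_n(B)=\inf\{t>0: B\le tI_n\otimes e\}$. Suppose $\phi:V\to W$ is completely gauge-contractive. Then the unital extension $\tilde\phi:V_1\to W$, $\tilde\phi(x,\lambda)=\phi(x)+\lambda e$, is completely positive, where $V_1$ carries the cones $M_n(V_1)_+=\{(A,X):u_n(-A,-X)=0\}$.
   Context: An $L^\infty$-MOS is a complex $*$-vector space $V$ ($M_n(V)$ with $(x_{ij})^*=(x_{ji}^* )$, self-adjoint part $M_n(V)_{sa}$) with proper gauges $\nu_n:M_n(V)_{sa}\to[0,\infty)$ (subadditive, positively homogeneous, $\nu_n(A)=\nu_n(-A)=0\Rightarrow A=0$) such that $\nu_k(X^*AX)\le\|X\|^2\nu_n(A)$ for scalar $X\in M_{n,k}$ and $\nu_{n+k}(A\oplus B)=\max\{\nu_n(A),\nu_k(B)\}$. An abstract operator system is a $*$-vector space with proper cones $M_n(W)_+\subseteq M_n(W)_{sa}$ closed under direct sums and scalar conjugations $B\mapsto XBX^*$, and $e$ such that each $(M_n(W)_{sa},M_n(W)_+,I_n\otimes e)$ is an Archimedean order unit space. A linear map $\phi:(V,\{\nu_n\})\to(W,\{\omega_n\})$ is completely gauge-contractive if $\phi(x^* )=\phi(x)^*$ and $\omega_n(\phi^{(n)}(A))\le\nu_n(A)$ for all $n$ and $A\in M_n(V)_{sa}$. Unitization: $V_1=V\oplus\mathbb{C}$, $M_n(V_1)=M_n(V)\oplus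 M_n$, $(A,X)^*=(A^*,X^* )$, $X_t=tI_n-X$, $Y\gg0$ means positive invertible, $u_n(A,X)=\inf\{t>0:X_t\gg0,\ \nu_n(X_t^{-1/2}AX_t^{-1/2})\le1\}$. Completely positive means each $\tilde\phi^{(n)}$ maps $M_n(V_1)_+$ into $M_n(W)_+$. *)

(* Defs.v *)
(* Complex scalars are modelled by an arbitrary
   numClosedFieldType C (e.g. algC). *)
From HB Require Import structures.
From mathcomp Require Import all_boot all_order all_algebra.
Set Implicit Arguments. Unset Strict Implicit. Unset Printing Implicit Defensive.
Import Order.TTheory GRing.Theory Num.Theory.
Local Open Scope ring_scope.

Section Defs.
Variable C : numClosedFieldType.

Definition adjmx m n (X : 'M[C]_(m, n)) : 'M[C]_(n, m) :=
  \matrix_(i, j) (X j i)^*.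

Definition psdmx n (X : 'M[C]_n) : Prop :=
  adjmx X = X /\ forall v : 'cV[C]_n, 0 <= (adjmx v *m X *m v) 0 0.

Definition pdmx n (X : 'M[C]_n) : Prop := psdmx X /\ X \in unitmx.

Definition starspace (V : lmodType C) (star : V -> V) : Prop :=
  (forall x, star (star x) = x) /\
  (forall x y, star (x + y) = star x + star y) /\
  (forall (a : C) x, star (a *: x) = a^* *: star x).

Section Mx.
Variables (V : lmodType C) (star : V -> V).

Definition mxstar m n (A : 'M[V]_(m, n)) : 'M[V]_(n, m) :=
  \matrix_(i, j) star (A j i).

Definition sa n (A : 'M[V]_n) : Prop := mxstar A = A.

(* X^* A X for a scalar matrix X in M_{n,k} *)
Definition cong n k (X : 'M[C]_(n, k)) (A : 'M[V]_n) : 'M[V]_k :=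
  \matrix_(i, j) \sum_(p < n) \sum_(q < n) (((X p i)^* * X q j) *: A p q).

Definition mxscale m n (r : C) (A : 'M[V]_(m, n)) : 'M[V]_(m, n) :=
  map_mx ( *:%R r) A.

(* X (x) e  for a scalar matrix X; in particular I_n (x) e = tens 1%:M e *)
Definition tens m n (X : 'M[C]_(m, n)) (e : V) : 'M[V]_(m, n) :=
  \matrix_(i, j) (X i j *: e).
End Mx.

(* "inf S <= c" for a set S of reals (S is always a subset of (0,oo) here) *)
Definition inf_le (S : C -> Prop) (c : C) : Prop :=
  forall eps : C, 0 < eps -> exists t, S t /\ t < c + eps.

Definition Linf_MOS (V : lmodType C) (star : V -> V)
    (nu : forall n, 'M[V]_n -> C) : Prop :=
  starspace star /\
  (forall n (A : 'M[V]_n), sa star A -> 0 <= nu n A) /\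
  (forall n (A B : 'M[V]_n), sa star A -> sa star B ->
      nu n (A + B) <= nu n A + nu n B) /\
  (forall n (r : C) (A : 'M[V]_n), 0 <= r -> sa star A ->
      nu n (mxscale r A) = r * nu n A) /\
  (forall n (A : 'M[V]_n), sa star A -> nu n A = 0 -> nu n (- A) = 0 -> A = 0) /\
  (* nu_k(X^* A X) <= ||X||^2 nu_n(A); ||X||^2 = min{c >= 0 : X^* X <= c I} *)
  (forall n k (X : 'M[C]_(n, k)) (A : 'M[V]_n) (c : C),
      sa star A -> 0 <= c -> psdmx (c%:M - adjmx X *m X) ->
      nu k (cong X A) <= c * nu n A) /\
  (forall n k (A : 'M[V]_n) (B : 'M[V]_k), sa star A -> sa star B ->
      nu (n + k)%N (block_mx A 0 0 B) = Num.max (nu n A) (nu k B)).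

Definition opsys (W : lmodType C) (star : W -> W)
    (cone : forall n, 'M[W]_n -> Prop) (e : W) : Prop :=
  starspace star /\
  (forall n (B : 'M[W]_n), cone n B -> sa star B) /\
  (forall n (B1 B2 : 'M[W]_n), cone n B1 -> cone n B2 -> cone n (B1 + B2)) /\
  (forall n (r : C) (B : 'M[W]_n), 0 <= r -> cone n B -> cone n (mxscale r B)) /\
  (forall n (B : 'M[W]_n), cone n B -> cone n (- B) -> B = 0) /\
  (forall n k (A : 'M[W]_n) (B : 'M[W]_k), cone n A -> cone k B ->
      cone (n + k)%N (block_mx A 0 0 B)) /\
  (forall n k (X : 'M[C]_(k, n)) (B : 'M[W]_n), cone n B ->
      cone k (cong (adjmx X) B)) /\
  star e = e /\
  (forall n (B : 'M[W]_n), sa star B ->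
      exists t : C, 0 < t /\ cone n (tens (t%:M) e - B)) /\
  (forall n (B : 'M[W]_n), sa star B ->
      (forall eps : C, 0 < eps -> cone n (B + tens (eps%:M) e)) -> cone n B).

(* the set whose infimum is the order gauge omega_n(B) *)
Definition omega_set (W : lmodType C) (cone : forall n, 'M[W]_n -> Prop)
    (e : W) n (B : 'M[W]_n) (t : C) : Prop :=
  0 < t /\ cone n (tens (t%:M) e - B).

Definition cgc (V W : lmodType C) (starV : V -> V) (starW : W -> W)
    (nu : forall n, 'M[V]_n -> C) (cone : forall n, 'M[W]_n -> Prop) (e : W)
    (phi : {linear V -> W}) : Prop :=
  (forall x, phi (starV x) = starW (phi x)) /\
  (forall n (A : 'M[V]_n), sa starV A ->
      inf_le (omega_set cone e (map_mx phi A)) (nu n A)).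

(* the set whose infimum is u_n(A, X); X_t^{-1/2} is the positive square
   root S of X_t^{-1}, X_t = t I - X *)
Definition u_set (V : lmodType C) (nu : forall n, 'M[V]_n -> C)
    n (A : 'M[V]_n) (X : 'M[C]_n) (t : C) : Prop :=
  0 < t /\ pdmx (t%:M - X) /\
  exists S : 'M[C]_n, psdmx S /\ S *m S = invmx (t%:M - X) /\
     nu n (cong S A) <= 1.

(* M_n(V_1)_+ = {(A,X) self-adjoint : u_n(-A,-X) = 0} *)
Definition unit_cone (V : lmodType C) (star : V -> V)
    (nu : forall n, 'M[V]_n -> C) n (A : 'M[V]_n) (X : 'M[C]_n) : Prop :=
  sa star A /\ adjmx X = X /\ inf_le (u_set nu (- A) (- X)) 0.

Definition unital_ext (V W : lmodType C) (phi : {linear V -> W}) (e : W)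
    n (A : 'M[V]_n) (X : 'M[C]_n) : 'M[W]_n :=
  map_mx phi A + tens X e.

End Defs.

(* Main.v *)
Require Import Defs.
From HB Require Import structures.
From mathcomp Require Import all_boot all_order all_algebra.
From mathcomp Require Import ring.
Import Order.TTheory GRing.Theory Num.Theory.
Local Open Scope ring_scope.

Module Helpers.
Set Implicit Arguments. Unset Strict Implicit. Unset Printing Implicit Defensive.
Section Help.
Variable C : numClosedFieldType.
Implicit Types (V W : lmodType C).

Lemma adjmxK m n (X : 'M[C]_(m, n)) : adjmx (adjmx X) = X.
Proof. by apply/matrixP=> i j; rewrite !mxE conjCK. Qed.

Lemma adjmx_mul m n p (X : 'M[C]_(m, n)) (Y : 'M[C]_(n, p)) :
  adjmx (X *m Y) = adjmx Y *m adjmx X.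
Proof.
apply/matrixP=> i j; rewrite !mxE rmorph_sum; apply: eq_bigr => k _.
by rewrite !mxE rmorphM mulrC.
Qed.

Lemma adjmx1 n : adjmx (1%:M : 'M[C]_n) = 1%:M.
Proof. by apply/matrixP=> i j; rewrite !mxE rmorphMn rmorph1 eq_sym. Qed.

Lemma mxscaleDr V m n r (A B : 'M[V]_(m, n)) : mxscale r (A + B) = mxscale r A + mxscale r B.
Proof. by apply/matrixP=> i j; rewrite !mxE scalerDr. Qed.
Lemma mxscaleDl V m n r s (A : 'M[V]_(m, n)) : mxscale (r + s) A = mxscale r A + mxscale s A.
Proof. by apply/matrixP=> i j; rewrite !mxE scalerDl. Qed.
Lemma mxscaleA V m n r s (A : 'M[V]_(m, n)) : mxscale r (mxscale s A) = mxscale (r * s) A.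
Proof. by apply/matrixP=> i j; rewrite !mxE scalerA. Qed.
Lemma mxscale1 V m n (A : 'M[V]_(m, n)) : mxscale 1 A = A.
Proof. by apply/matrixP=> i j; rewrite !mxE scale1r. Qed.
Lemma mxscale0 V m n (A : 'M[V]_(m, n)) : mxscale 0 A = 0.
Proof. by apply/matrixP=> i j; rewrite !mxE scale0r. Qed.
Lemma mxscaleN1 V m n (A : 'M[V]_(m, n)) : mxscale (-1) A = - A.
Proof. by apply/matrixP=> i j; rewrite !mxE scaleN1r. Qed.

Lemma tensD V m n (P Q : 'M[C]_(m, n)) (e : V) : tens (P + Q) e = tens P e + tens Q e.
Proof. by apply/matrixP=> i j; rewrite !mxE scalerDl. Qed.

Lemma tensZ V m n r (P : 'M[C]_(m, n)) (e : V) : tens (r *: P) e = mxscale r (tens P e).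
Proof. by apply/matrixP=> i j; rewrite !mxE scalerA. Qed.

Lemma tens_scalar V n r (e : V) : tens (r%:M : 'M[C]_n) e = mxscale r (tens 1%:M e).
Proof. by rewrite -tensZ scalemx1. Qed.

Lemma congD V n k (X : 'M[C]_(n, k)) (A B : 'M[V]_n) :
  cong X (A + B) = cong X A + cong X B.
Proof.
apply/matrixP=> i j; rewrite !mxE -big_split; apply: eq_bigr => p _.
rewrite -big_split; apply: eq_bigr => q _; by rewrite !mxE scalerDr.
Qed.

Lemma congZ V n k (X : 'M[C]_(n, k)) r (A : 'M[V]_n) :
  cong X (mxscale r A) = mxscale r (cong X A).
Proof.
apply/matrixP=> i j; rewrite !mxE scaler_sumr; apply: eq_bigr => p _.
rewrite scaler_sumr; apply: eq_bigr => q _; by rewrite !mxE !scalerA mulrC.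
Qed.

Lemma congN V n k (X : 'M[C]_(n, k)) (A : 'M[V]_n) : cong X (- A) = - cong X A.
Proof. by rewrite -mxscaleN1 congZ mxscaleN1. Qed.

Lemma cong_tens V n k (X : 'M[C]_(n, k)) (P : 'M[C]_n) (e : V) :
  cong X (tens P e) = tens (adjmx X *m P *m X) e.
Proof.
apply/matrixP=> i j; rewrite !mxE scaler_suml.
transitivity (\sum_q \sum_p ((X p i)^* * P p q * X q j) *: e); last first.
  apply: eq_bigr => q _; rewrite mxE mulr_suml scaler_suml.
  by apply: eq_bigr => p _; rewrite !mxE.
rewrite exchange_big; apply: eq_bigr => q _; apply: eq_bigr => p _.
by rewrite mxE scalerA; congr (_ *: _); ring.
Qed.

Lemma cong1 V n (A : 'M[V]_n) : cong 1%:M A = A.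
Proof.
apply/matrixP=> i j; rewrite !mxE (bigD1 i) //= [X in _ + X]big1; last first.
  move=> p pi; apply: big1 => q _; rewrite !mxE (negbTE pi) rmorph0.
  by rewrite mul0r scale0r.
rewrite addr0 (bigD1 j) //= [X in _ + X]big1; last first.
  by move=> q qj; rewrite !mxE (negbTE qj) mulr0 scale0r.
by rewrite !mxE !eqxx rmorph1 mulr1 scale1r addr0.
Qed.

Lemma cong_comp V n k l (S : 'M[C]_(n, k)) (T : 'M[C]_(k, l)) (A : 'M[V]_n) :
  cong T (cong S A) = cong (S *m T) A.
Proof.
apply/matrixP=> i j; rewrite !mxE.
transitivity (\sum_(a < k) \sum_(b < k) \sum_(p < n) \sum_(q < n)
   (((T a i)^* * T b j) * ((S p a)^* * S q b)) *: A p q).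
  apply: eq_bigr => a _; apply: eq_bigr => b _; rewrite mxE scaler_sumr.
  by apply: eq_bigr => p _; rewrite scaler_sumr; apply: eq_bigr => q _; rewrite scalerA.
transitivity (\sum_(p < n) \sum_(q < n) \sum_(a < k) \sum_(b < k)
   (((T a i)^* * T b j) * ((S p a)^* * S q b)) *: A p q).
  under eq_bigr => a _ do (rewrite exchange_big; under eq_bigr => p _ do rewrite exchange_big).
  rewrite exchange_big; apply: eq_bigr => p _.
  by rewrite exchange_big.
apply: eq_bigr => p _; apply: eq_bigr => q _.
rewrite !mxE rmorph_sum mulr_suml scaler_suml; apply: eq_bigr => a _.
rewrite mulr_sumr scaler_suml; apply: eq_bigr => b _.
by rewrite rmorphM; congr (_ *: _); ring.
Qed.

Lemma map_cong V W (f : {linear V -> W}) n k (X : 'M[C]_(n, k)) (A : 'M[V]_n) :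
  map_mx f (cong X A) = cong X (map_mx f A).
Proof.
apply/matrixP=> i j; rewrite !mxE linear_sum; apply: eq_bigr => p _.
rewrite linear_sum; apply: eq_bigr => q _; by rewrite linearZ !mxE.
Qed.

End Help.

Section Star.
Variable C : numClosedFieldType.
Variables (V : lmodType C) (star : V -> V).
Hypothesis Hs : starspace star.

Lemma star0 : star 0 = 0.
Proof.
case: Hs => _ [HD _]; have h := HD 0 0; rewrite addr0 in h.
by apply: (addrI (star 0)); rewrite addr0 -h.
Qed.

Lemma starD x y : star (x + y) = star x + star y.
Proof. by case: Hs => _ []. Qed.

Lemma starZ (a : C) x : star (a *: x) = a^* *: star x.
Proof. by case: Hs => _ []. Qed.

Lemma starN x : star (- x) = - star x.
Proof. by rewrite -scaleN1r starZ rmorphN rmorph1 scaleN1r. Qed.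

Lemma star_sum I (r : seq I) (P : pred I) (F : I -> V) :
  star (\sum_(i <- r | P i) F i) = \sum_(i <- r | P i) star (F i).
Proof. exact: (big_morph star starD star0). Qed.

Lemma sa0 n : sa star (0 : 'M[V]_n).
Proof. by apply/matrixP=> i j; rewrite !mxE star0. Qed.

Lemma saD n (A B : 'M[V]_n) : sa star A -> sa star B -> sa star (A + B).
Proof.
move=> hA hB; apply/matrixP=> i j; rewrite !mxE starD.
by rewrite -{2}hA -{2}hB !mxE.
Qed.

Lemma saN n (A : 'M[V]_n) : sa star A -> sa star (- A).
Proof. by move=> hA; apply/matrixP=> i j; rewrite !mxE starN -{2}hA !mxE. Qed.

Lemma saZ n r (A : 'M[V]_n) : r^* = r -> sa star A -> sa star (mxscale r A).
Proof. by move=> hr hA; apply/matrixP=> i j; rewrite !mxE starZ hr -{2}hA !mxE. Qed.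

Lemma sa_entry n (A : 'M[V]_n) i j : sa star A -> star (A i j) = A j i.
Proof. by move=> hA; rewrite -{2}hA !mxE. Qed.

Lemma sa_cong n k (X : 'M[C]_(n, k)) (A : 'M[V]_n) : sa star A -> sa star (cong X A).
Proof.
move=> hA; apply/matrixP=> i j; rewrite !mxE star_sum exchange_big.
apply: eq_bigr => q _; rewrite star_sum; apply: eq_bigr => p _.
rewrite starZ (sa_entry _ _ hA) rmorphM; congr (_ *: _).
by rewrite mulrC; congr (_ * _); apply: conjCK.
Qed.

Lemma sa_tens n (X : 'M[C]_n) (e : V) : adjmx X = X -> star e = e -> sa star (tens X e).
Proof.
move=> hX he; apply/matrixP=> i j; rewrite !mxE starZ he.
by rewrite -{2}hX !mxE.
Qed.

End Star.

Section Comb.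
Variable C : numClosedFieldType.
Variables (W : lmodType C) (n : nat) (P Y E : 'M[W]_n).

Definition f3 (a b d : C) := mxscale a P + mxscale b Y + mxscale d E.

Lemma f3D a b d a' b' d' : f3 a b d + f3 a' b' d' = f3 (a + a') (b + b') (d + d').
Proof.
by rewrite /f3 !mxscaleDl [LHS]addrACA [X in X + _ = _]addrACA.
Qed.

Lemma f3P a : mxscale a P = f3 a 0 0.
Proof. by rewrite /f3 !mxscale0 !addr0. Qed.
Lemma f3Y a : mxscale a Y = f3 0 a 0.
Proof. by rewrite /f3 !mxscale0 add0r addr0. Qed.
Lemma f3E a : mxscale a E = f3 0 0 a.
Proof. by rewrite /f3 !mxscale0 !add0r. Qed.

Lemma final_id s1 t c eps :
  mxscale s1 (P + Y + mxscale eps E) =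
  (mxscale s1 (mxscale t E + Y) + P) + mxscale (s1 - 1) (mxscale c E + P)
  + mxscale (s1 * eps - s1 * t - (s1 - 1) * c) E.
Proof.
rewrite !mxscaleDr !mxscaleA.
rewrite -[P]mxscale1 -[Y]mxscale1 -[E]mxscale1 !mxscaleA.
rewrite !f3P !f3Y !f3E !f3D; congr f3; ring.
Qed.

End Comb.

End Helpers.
Import Helpers.

Theorem lemma3p12 (C : numClosedFieldType) (V W : lmodType C)
    (starV : V -> V) (nu : forall n, 'M[V]_n -> C)
    (starW : W -> W) (cone : forall n, 'M[W]_n -> Prop) (e : W)
    (phi : {linear V -> W}) :
  Linf_MOS starV nu ->
  opsys starW cone e ->
  cgc starV starW nu cone e phi ->
  forall n (A : 'M[V]_n) (X : 'M[C]_n),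
    unit_cone starV nu A X -> cone n (unital_ext phi e A X).
Proof.
move=> [HsV _] [HsW [_ [Hadd [Hscale [_ [_ [Hcong [He [Hunit Harch]]]]]]]]].
move=> [Hphistar Hcgc] n A X [saA [hX infU]].
rewrite /unital_ext.
set PA := map_mx phi A.
have saPA : sa starW PA.
  apply/matrixP=> i j; rewrite !mxE -Hphistar.
  by rewrite (sa_entry _ _ saA).
set E := tens (1%:M : 'M[C]_n) e.
have coneE : cone n E.
  have [t0 [t0p h]] := Hunit n 0 (sa0 HsW n).
  rewrite subr0 tens_scalar in h.
  have := Hscale _ t0^-1 _ _ h; rewrite invr_ge0 ltW // => /(_ isT).
  by rewrite mxscaleA mulVf ?mxscale1 // gt_eqF.
have [c [cp hc]] := Hunit n (- PA) (saN HsW saPA).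
rewrite opprK tens_scalar in hc.
have saG : sa starW (PA + tens X e).
  by apply: saD => //; apply: sa_tens.
apply: Harch => // eps epsp.
have eps2p : 0 < eps / 2 by rewrite divr_gt0 // ltr0n.
have [t [[tp [pdM [S [psdS [SS nuS]]]]] tlt]] := infU (eps / 2) eps2p.
rewrite add0r in tlt.
have dp : 0 < eps / (2 * c) by rewrite divr_gt0 // mulr_gt0 // ltr0n.
have [s [[sp hs] slt]] := Hcgc n (cong S (- A)) (sa_cong HsV _ (saN HsV saA)) _ dp.
rewrite map_cong map_mxN congN opprK tens_scalar in hs.
have slt1 : s < 1 + eps / (2 * c).
  by apply: (lt_le_trans slt); rewrite lerD2r.
have [s1 [s1ge [s1lt hs1]]] : exists s1, 1 <= s1 /\ s1 < 1 + eps / (2 * c) /\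
    cone n (mxscale s1 E + cong S PA).
  case/orP: (real_leVge (gtr0_real sp) (real1 C)) => hs1; last by exists s.
  exists 1; split => //; split; first by rewrite ltrDl.
  have -> : mxscale 1 E = mxscale s E + mxscale (1 - s) E.
    by rewrite -mxscaleDl addrC subrK.
  rewrite addrAC; apply: (Hadd) => //; apply: (Hscale) => //.
  by rewrite subr_ge0.
set M := t%:M - - X in pdM SS.
have Mu : M \in unitmx by case: pdM.
have SSu : S *m S \in unitmx by rewrite SS unitmx_inv.
have Su : S \in unitmx by move: SSu; rewrite unitmx_mul => /andP[].
set T := invmx S.
have hS : adjmx S = S by case: psdS.
have e1 : S *m T = 1%:M by rewrite mulmxV.
have hT : adjmx T = T.
  rewrite -[adjmx T]mulmx1 -e1 mulmxA -[in adjmx T *m S]hS -adjmx_mul e1.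
  by rewrite adjmx1 mul1mx.
have TT : T *m T = M.
  have e2 : (S *m S) *m (T *m T) = 1%:M.
    by rewrite mulmxA -(mulmxA S) e1 mulmx1 e1.
  by rewrite -(mulKmx SSu (T *m T)) e2 mulmx1 SS invmxK.
have hconj := Hcong n n (adjmx T) _ hs1.
rewrite adjmxK congD congZ cong_tens cong_comp e1 cong1 hT mulmx1 TT in hconj.
have eM : tens M e = mxscale t E + tens X e.
  by rewrite /M opprK tensD tens_scalar.
rewrite eM in hconj.
set r := s1 * eps - s1 * t - (s1 - 1) * c.
have s1p : 0 < s1 by apply: lt_le_trans s1ge.
have rge : 0 <= r.
  have cn0 : c != 0 by rewrite gt_eqF.
  have h1 : (s1 - 1) * c <= eps / 2.
    have -> : eps / 2 = eps / (2 * c) * c by field; rewrite cn0 ?andbT ?pnatr_eq0.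
    by apply: ler_wpM2r; [exact: ltW | rewrite lerBlDl ltW].
  have h2 : eps / 2 <= eps - t.
    rewrite lerBrDr; have : eps / 2 + t <= eps / 2 + eps / 2 by rewrite lerD2l ltW.
    by rewrite -splitr.
  have h3 : eps - t <= s1 * (eps - t).
    by apply: ler_peMl => //; apply: le_trans (ltW eps2p) h2.
  by rewrite /r -mulrBr subr_ge0 (le_trans h1 (le_trans h2 h3)).
have hfin : cone n (mxscale s1 (PA + tens X e + mxscale eps E)).
  rewrite (final_id _ _ _ s1 t c eps).
  apply: (Hadd); last by apply: (Hscale).
  apply: (Hadd) => //; apply: (Hscale) => //.
  by rewrite subr_ge0.
have := Hscale _ s1^-1 _ _ hfin; rewrite invr_ge0 ltW // => /(_ isT).
by rewrite mxscaleA mulVf ?mxscale1 ?gt_eqF // tens_scalar.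
Qed.
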